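(* Let $G$ be a bipartite graph of order $n$. Then $$Mo(G) \leq \alpha_1(1-\alpha_1)(1-2\alpha_1)n^3=\frac{\sqrt{3}}{18}n^3,$$ where $\alpha_1=\frac{1}{2}\left(1-\frac{1}{\sqrt{3}}\right)$.
   Context: All graphs are finite and simple. For a graph $G$ and an edge $uv$ of $G$, $n_G(u,v)$ denotes the number of vertices of $G$ whose distance in $G$ to $u$ is strictly smaller than their distance in $G$ to $v$. The Mostar index of $G$ is $Mo(G)=\sum_{uv\in E(G)}|n_G(u,v)-n_G(v,u)|$. *)

(* Defs.v *)
From mathcomp Require Import all_boot all_order all_algebra.
Set Implicit Arguments. Unset Strict Implicit. Unset Printing Implicit Defensive.
Import Order.TTheory GRing.Theory Num.Theory.

Definition simple_graph (T : finType) (e : rel T) : Prop :=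
  symmetric e /\ irreflexive e.

Definition bipartite (T : finType) (e : rel T) : Prop :=
  exists c : T -> bool, forall x y, e x y -> c x != c y.

Fixpoint walk (T : finType) (e : rel T) (k : nat) (x y : T) : bool :=
  if k is k'.+1 then [exists z, e x z && walk e k' z y] else x == y.

(* If y is not
   reachable from x, the value is #|T| (any shortest walk has length < #|T|).
   For an edge uv, vertices outside the component of u and v get the same
   value #|T| to both ends, so they are counted in neither n(u,v) nor n(v,u),
   in accordance with infinite distance. *)
Definition gdist (T : finType) (e : rel T) (x y : T) : nat :=
  find (fun k => walk e k x y) (iota 0 #|T|).

Definition ncloser (T : finType) (e : rel T) (u v : T) : nat :=
  #|[set w : T | gdist e w u < gdist e w v]|.

Definition mostar (T : finType) (e : rel T) : nat :=
  \sum_(u : T) \sum_(v : T | e u v && (enum_rank u < enum_rank v)%N)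
     ((ncloser e u v - ncloser e v u) + (ncloser e v u - ncloser e u v)).

(* Main.v *)
Require Import Defs.
From mathcomp Require Import all_boot all_order all_algebra.
From mathcomp Require Import ring lra.
Import Order.TTheory GRing.Theory Num.Theory.
Section Real.
Local Open Scope ring_scope.
Variable R : rcfType.
Let s : R := Num.sqrt 3.
Lemma s2 : s ^+ 2 = 3. Proof. by rewrite sqr_sqrtr // ler0n. Qed.
Lemma s_ge : 3/2 <= s.
Proof. have h := s2. have h0 : 0 <= s by rewrite sqrtr_ge0. nra. Qed.

Lemma poly_bound (N y : R) : 0 <= y -> y <= N ->
  y * (N - y) * (N - 2 * y) <= s / 18 * N ^+ 3.
Proof.
move=> y0 yN.
have -> : y * (N - y) * (N - 2 * y) =
  s / 18 * N ^+ 3 - 2 * (y - (3 - s)/6 * N)^+2 * ((3 + 2 * s)/6 * N - y)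
  + (s^+2 - 3) * (N^+2 * y / 6 + (2 * s - 9) * N^+3 / 108).
  by field.
rewrite s2 subrr mul0r addr0 lerBlDr lerDl.
apply: mulr_ge0; first by rewrite mulr_ge0 // sqr_ge0.
have := s_ge. nra.
Qed.

Lemma a1_id (n : R) : let a1 : R := 2^-1 * (1 - (Num.sqrt 3)^-1) in
  a1 * (1 - a1) * (1 - 2 * a1) * n ^+ 3 = Num.sqrt 3 / 18 * n ^+ 3.
Proof.
move=> a1. have s0 : 0 < s by have := s_ge; lra.
have sn : s != 0 by rewrite gt_eqF.
apply/eqP; rewrite -subr_eq0 /a1 -/s.
have -> : 2^-1 * (1 - s^-1) * (1 - 2^-1 * (1 - s^-1)) * (1 - 2 * (2^-1 * (1 - s^-1))) * n ^+ 3 - s / 18 * n ^+ 3 =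
  (s^+2 - 3) * (- (2 * s^+2 - 3) * n^+3 / (36 * s^+3)).
  by field.
by rewrite s2 subrr mul0r.
Qed.
Lemma edge_bound (a b x y N : R) : 1 <= x -> x <= a -> 1 <= y -> y <= b ->
  a + b <= N -> `|a - b| <= s / 18 * N ^+ 2 * (x^-1 + y^-1).
Proof.
wlog: a b x y / b <= a.
  move=> H hx hxa hy hyb hab. case/orP: (le_total b a) => h; first exact: H.
  rewrite distrC [x^-1 + _]addrC; apply: H => //; lra.
move=> hba hx hxa hy hyb hab.
rewrite ger0_norm ?subr_ge0 //.
have h1 : a - b <= N - 2 * y by lra.
apply: le_trans h1 _.
have Ny : 0 < N - y by lra.
have yp : 0 < y by lra.
have hinv : (N - y)^-1 <= x^-1.
  rewrite lef_pV2 ?posrE; lra.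
have s0 : 0 <= s by rewrite sqrtr_ge0.
have C0 : 0 <= s / 18 * N ^+ 2 by rewrite mulr_ge0 ?sqr_ge0 // divr_ge0.
apply: le_trans (_ : s / 18 * N ^+ 2 * ((N - y)^-1 + y^-1) <= _); last first.
  by rewrite ler_wpM2l // lerD2r.
have -> : s / 18 * N ^+ 2 * ((N - y)^-1 + y^-1) = (s / 18 * N ^+ 3) / (y * (N - y)).
  by field; rewrite ?gt_eqF.
rewrite ler_pdivlMr ?mulr_gt0 //.
have yN : y <= N by lra.
have := @poly_bound N y (ltW yp) yN.
have -> : y * (N - y) * (N - 2 * y) = (N - 2 * y) * (y * (N - y)) by ring.
by [].
Qed.

End Real.

Section G.
Variables (T : finType) (e : rel T).
Hypotheses (Hsym : symmetric e) (Hirr : irreflexive e).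
Variable c : T -> bool.
Hypothesis Hc : forall x y, e x y -> c x != c y.

Lemma walk1 x y : walk e 1 x y = e x y.
Proof.
rewrite /=; apply/existsP/idP => [[z /andP[exz /eqP <-]]//|exy].
by exists y; rewrite exy eqxx.
Qed.

Lemma card_ge2 {x y : T} : x != y -> 1 < #|T|.
Proof.
move=> xy; apply: leq_trans (max_card [set x; y]).
by rewrite cards2 xy.
Qed.

Lemma gdist0 x : gdist e x x = 0.
Proof.
rewrite /gdist; have : 0 < #|T| by apply/card_gt0P; exists x.
by case: #|T| => // N _ /=; rewrite eqxx.
Qed.

Lemma gdist_ge1 x y : x != y -> 0 < gdist e x y.
Proof.
rewrite /gdist => /negbTE xy; have : 0 < #|T| by apply/card_gt0P; exists x.
by case: #|T| => // N _ /=; rewrite xy.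
Qed.

Lemma gdist1 x y : e x y -> gdist e x y = 1.
Proof.
move=> exy; have xy : x != y by apply: contraTneq exy => ->; rewrite Hirr.
rewrite /gdist; move: (card_ge2 xy).
case: #|T| => [|[|N]] // _ /=. by move: (walk1 x y) => /= ->; rewrite (negbTE xy) exy.
Qed.

Lemma gdist_ge2 x y : x != y -> ~~ e x y -> 1 < #|T| -> 1 < gdist e x y.
Proof.
move=> xy nexy; rewrite /gdist.
case: #|T| => [|[|N]] // _ /=.
by move: (walk1 x y) => /= ->; rewrite (negbTE xy) (negbTE nexy).
Qed.

Definition deg u := #|[set w | e u w]|.

Lemma deg_le u v : e u v -> deg u <= ncloser e u v.
Proof.
move=> euv; have uv : u != v by apply: contraTneq euv => ->; rewrite Hirr.
have T2 := card_ge2 uv.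
have -> : deg u = #|u |: ([set w | e u w] :\ v)|.
  rewrite cardsU1 !inE Hirr andbF /= /deg (cardsD1 v [set w | e u w]) !inE euv.
  by rewrite add1n.
apply: subset_leq_card; apply/subsetP => w; rewrite !inE.
case/predU1P => [->|/andP[wv euw]].
  by rewrite gdist0 gdist_ge1.
have wu : w != u by apply: contraTneq euw => ->; rewrite Hirr.
rewrite gdist1 ?(Hsym w u) // gdist_ge2 //.
apply/negP => ewv.
have := Hc _ _ euw; have := Hc _ _ euv; have := Hc _ _ ewv.
by case: (c u); case: (c v); case: (c w).
Qed.

Lemma disj u v : ncloser e u v + ncloser e v u <= #|T|.
Proof.
rewrite /ncloser -cardsUI.
have -> : [set w | gdist e w u < gdist e w v] :&: [set w | gdist e w v < gdist e w u] = set0.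
  apply/setP => w; rewrite !inE; apply/negP => /andP[h1 h2].
  by have := ltn_trans h1 h2; rewrite ltnn.
by rewrite cards0 addn0 max_card.
Qed.


Section Main.
Local Open Scope ring_scope.
Variable R : rcfType.

Lemma natr_dist (a b : nat) : (((a - b) + (b - a))%N)%:R = `|a%:R - b%:R| :> R.
Proof.
case/orP: (leq_total a b) => h.
  have /eqP -> : (a - b == 0)%N by rewrite subn_eq0.
  by rewrite add0n natrB // distrC ger0_norm // subr_ge0 ler_nat.
have /eqP -> : (b - a == 0)%N by rewrite subn_eq0.
by rewrite addn0 natrB // ger0_norm // subr_ge0 ler_nat.
Qed.

Let P u v := e u v && (enum_rank u < enum_rank v)%N.

Lemma sum_sym (F : T -> R) :
  \sum_u \sum_(v | P u v) (F u + F v) = \sum_u (deg u)%:R * F u.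
Proof.
have step : \sum_u \sum_(v | P u v) F v = \sum_u \sum_(v | P v u) F u.
  rewrite (eq_bigr (fun u => \sum_v (if P u v then F v else 0))); last first.
    by move=> u _; rewrite big_mkcond.
  rewrite exchange_big /=; apply: eq_bigr => v _; by rewrite [RHS]big_mkcond.
under eq_bigr => u _ do rewrite big_split /=.
rewrite big_split /= step -big_split /=; apply: eq_bigr => u _.
rewrite big_mkcond [X in _ + X]big_mkcond -big_split /=.
rewrite (eq_bigr (fun v => if v \in [set w | e u w] then F u else 0)); last first.
  move=> v _; rewrite inE /P (Hsym v u).
  case euv: (e u v) => /=; last by rewrite addr0.
  have uv : u != v by apply: contraTneq euv => ->; rewrite Hirr.
  have ruv : enum_rank u != enum_rank v by apply: contra uv => /eqP/enum_rank_inj ->; rewrite eqxx.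
  case: ltngtP => // [_|_|h]; rewrite ?addr0 ?add0r //.
  by move: ruv; rewrite (val_inj h) eqxx.
by rewrite -big_mkcond sumr_const mulr_natl.
Qed.

Lemma main_bound : (mostar e)%:R <= Num.sqrt 3 / 18 * (#|T|%:R : R) ^+ 3.
Proof.
set n : R := #|T|%:R.
set K := Num.sqrt 3 / 18 * n ^+ 2.
have K0 : 0 <= K by rewrite mulr_ge0 ?sqr_ge0 // divr_ge0 // sqrtr_ge0.
apply: le_trans (_ : \sum_u \sum_(v | P u v) K * ((deg u)%:R^-1 + (deg v)%:R^-1) <= _).
  rewrite /mostar natr_sum; apply: ler_sum => u _; rewrite natr_sum.
  apply: ler_sum => v /andP[euv _]; rewrite natr_dist.
  have evu : e v u by rewrite Hsym.
  apply: edge_bound.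
  - rewrite ler1n card_gt0; apply/set0Pn; exists v; by rewrite inE.
  - by rewrite ler_nat deg_le.
  - rewrite ler1n card_gt0; apply/set0Pn; exists u; by rewrite inE.
  - by rewrite ler_nat deg_le.
  - by rewrite -natrD ler_nat disj.
under eq_bigr => u _ do rewrite -mulr_sumr.
rewrite -mulr_sumr sum_sym exprSr mulrA ler_wpM2l //.
apply: le_trans (_ : \sum_(u : T) (1 : R) <= _); last first.
  by rewrite sumr_const.
apply: ler_sum => u _.
have [->|d0] := eqVneq (deg u) 0%N; first by rewrite mul0r.
by rewrite mulfV // pnatr_eq0.
Qed.
End Main.
End G.

Local Open Scope ring_scope.
Theorem theorem1 (R : rcfType) (T : finType) (e : rel T) :
  simple_graph e -> bipartite e ->
  let n : R := (#|T|)%:R in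
  let a1 : R := 2^-1 * (1 - (Num.sqrt 3)^-1) in
  (mostar e)%:R <= a1 * (1 - a1) * (1 - 2 * a1) * n ^+ 3 /\
  a1 * (1 - a1) * (1 - 2 * a1) * n ^+ 3 = Num.sqrt 3 / 18 * n ^+ 3.
Proof.
move=> [Hsym Hirr] [c Hc] n a1.
have E := @a1_id R n; rewrite -/a1 in E.
split; last exact: E.
rewrite E; exact: (@main_bound T e Hsym Hirr c Hc R).
Qed.
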